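(* Let $n=2^uv$ with $v$ odd and $u\ge 0$. Suppose $(\varepsilon,\beta,\gamma;(12))\in\mathrm{Par}(n)$, where every cycle of $\beta$ has length divisible by $2^u$. Then: <ul> <li>(i) the number of cycles of odd length of $\beta$ is at least the number of cycles of odd length of $\gamma$;</li> <li>(ii) if $u\ge1$, then $\gamma$ has no cycles of odd length.</li> </ul> Fixed points count as cycles of length $1$.
   Context: A Latin square of order $n$ is an $n\times n$ array with rows, columns and symbols indexed by $[n]$, each symbol occurring once in each row and each column, with triple set $O(L)$. Permutations act on the right; $\varepsilon$ is the identity. A paratopism $(\alpha,\beta,\gamma;(12))$ maps $L$ to $L^\sigma$ with triple set $\{(y\beta,x\alpha,z\gamma):(x,y,z)\in O(L)\}$; it is an autoparatopism of $L$ if $L^\sigma=L$. $\mathrm{Par}(n)$ is the set of paratopisms that are autoparatopisms of at least one Latin square of order $n$. *)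

(* Defs.v *)
From mathcomp Require Import all_boot all_fingroup.
Set Implicit Arguments. Unset Strict Implicit. Unset Printing Implicit Defensive.

(* Rows, columns and symbols are indexed by 'I_n (i.e. {0,...,n-1} ~ [n]).
   A Latin square is given by its entry function L x y = symbol in cell (x,y). *)
Definition is_latin (n : nat) (L : 'I_n -> 'I_n -> 'I_n) : Prop :=
  (forall x : 'I_n, injective (L x)) /\ (forall y : 'I_n, injective (fun x => L x y)).

Definition triples (n : nat) (L : 'I_n -> 'I_n -> 'I_n) : {set 'I_n * 'I_n * 'I_n} :=
  [set t : 'I_n * 'I_n * 'I_n | t.2 == L t.1.1 t.1.2].

(* Triple set of L^sigma for sigma = (alpha,beta,gamma;(12)):
   {(y beta, x alpha, z gamma) : (x,y,z) in O(L)}; permutations act on the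
   right, so "x alpha" is the application alpha x. *)
Definition paratopism12_image (n : nat) (alpha beta gamma : {perm 'I_n})
    (L : 'I_n -> 'I_n -> 'I_n) : {set 'I_n * 'I_n * 'I_n} :=
  [set (beta t.1.2, alpha t.1.1, gamma t.2) | t in triples L].

Definition is_autoparatopism12 (n : nat) (alpha beta gamma : {perm 'I_n})
    (L : 'I_n -> 'I_n -> 'I_n) : Prop :=
  paratopism12_image alpha beta gamma L = triples L.

Definition in_Par12 (n : nat) (alpha beta gamma : {perm 'I_n}) : Prop :=
  exists L : 'I_n -> 'I_n -> 'I_n, is_latin L /\ is_autoparatopism12 alpha beta gamma L.

Definition n_odd_cycles (n : nat) (s : {perm 'I_n}) : nat :=
  #|[set c in porbits s | odd #|c|]|.

(* Main.v *)
Require Import Defs.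
From mathcomp Require Import all_boot all_fingroup.
From mathcomp Require Import zify.
Set Implicit Arguments. Unset Strict Implicit. Unset Printing Implicit Defensive.

Section S.
Variables (n : nat) (beta gamma : {perm 'I_n}) (L : 'I_n -> 'I_n -> 'I_n).
Hypothesis Lrow : forall x, injective (L x).
Hypothesis HL : forall a b, L (beta b) a = gamma (L a b).

Definition T (p : 'I_n * 'I_n) := (beta p.2, p.1).

Lemma LT j p : L (iter j T p).1 (iter j T p).2 = iter j gamma (L p.1 p.2).
Proof. elim: j => //= j <-; by rewrite HL. Qed.

Lemma Teven s a b : iter s.*2 T (a, b) = (iter s beta a, iter s beta b).
Proof. elim: s => // s IH; by rewrite doubleS /= IH. Qed.

Lemma Todd s a b : iter s.*2.+1 T (a, b) = (iter s.+1 beta b, iter s beta a).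
Proof. by rewrite /= Teven. Qed.

Lemma T_inj : injective T.
Proof. move=> [a b] [c d] [/perm_inj -> ->]; done. Qed.

Lemma iterT_inj j : injective (iter j T).
Proof. elim: j => // j IH p q /= /T_inj; exact: IH. Qed.

Lemma K1 j a b : odd j -> iter j T (a, b) = (a, b) -> iter j beta a = a.
Proof.
move=> oj; rewrite -(odd_double_half j) oj add1n Todd => -[Ha Hb].
have: iter (j./2).+1 beta (iter j./2 beta a) = a by rewrite Hb.
rewrite -iterD; suff ->: j./2.*2.+1 = j./2.+1 + j./2 by []. lia.
Qed.

Lemma K2 j a b : ~~ odd j -> iter j T (a, b) = (a, b) -> iter j./2 beta a = a.
Proof.
move=> oj; rewrite -(odd_double_half j) (negbTE oj) add0n Teven => -[Ha Hb].
by rewrite doubleK.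
Qed.
End S.

Lemma iter_porbit_mul (T:finType) (s:{perm T}) x q : iter (q * #|porbit s x|) s x = x.
Proof. elim: q => [|q IH] //=; by rewrite mulSn iterD IH iter_porbit. Qed.

Lemma porbit_dvd (T:finType) (s:{perm T}) x j : iter j s x = x -> #|porbit s x| %| j.
Proof.
move=> H; set c := #|porbit s x|.
have c0 : 0 < c by rewrite lt0n card_porbit_neq0.
have Hm : iter (j %% c) s x = x.
  by move: H; rewrite {1}(divn_eq j c) addnC iterD iter_porbit_mul.
rewrite /dvdn.
have U := uniq_traject_porbit s x.
have := nth_uniq x (i:=j%%c) (j:=0) _ _ U; rewrite size_traject ltn_pmod // c0.
rewrite !nth_traject ?ltn_pmod //= Hm eqxx => /(_ isT isT) /esym.
done.
Qed.

Lemma porbits_dvd (T:finType) (s:{perm T}) d : (forall x, d %| #|porbit s x|) -> d %| #|T|.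
Proof.
move=> H.
have P : partition (orbit 'P <[s]> @: [set: T]) [set: T].
  apply: orbit_partition. apply/actsP => a _ y; by rewrite !inE.
rewrite -cardsT (card_partition P).
apply: dvdn_sum => A /imsetP [y _ ->]; by rewrite -porbitE.
Qed.
Section G.
Variables (n : nat) (beta gamma : {perm 'I_n}) (L : 'I_n -> 'I_n -> 'I_n).
Hypothesis Lrow : forall x, injective (L x).
Hypothesis HL : forall a b, L (beta b) a = gamma (L a b).
Variables (z : 'I_n) (m : nat).
Hypothesis Hz : iter m gamma z = z.

Definition sig (a : 'I_n) := invF (@Lrow a) z.
Lemma Lsig a : L a (sig a) = z.
Proof. exact: (f_invF (@Lrow a)). Qed.

Definition hh (a : 'I_n) := (iter m (T beta) (a, sig a)).1.

Lemma hcell a : iter m (T beta) (a, sig a) = (hh a, sig (hh a)).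
Proof.
have E := LT HL m (a, sig a); rewrite /= Lsig Hz in E.
rewrite /hh; case: (iter m (T beta) (a, sig a)) E => x y /= E.
by congr pair; apply: (@Lrow x); rewrite Lsig.
Qed.

Lemma hh_inj : injective hh.
Proof.
move=> a a' E.
have := hcell a; rewrite E -(hcell a') => /iterT_inj; by case.
Qed.

Definition gp := perm hh_inj.

Lemma giter k a : iter (m * k) (T beta) (a, sig a) = (iter k gp a, sig (iter k gp a)).
Proof.
elim: k => [|k IH]; first by rewrite muln0.
by rewrite mulnS iterD IH hcell /= permE.
Qed.

Lemma gfix a : iter (m * #|porbit gp a|) (T beta) (a, sig a) = (a, sig a).
Proof. by rewrite giter iter_porbit. Qed.

End G.
Lemma HLfrom n (beta gamma : {perm 'I_n}) L :
  is_autoparatopism12 1 beta gamma L -> forall a b, L (beta b) a = gamma (L a b).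
Proof.
move=> H a b.
have: (beta b, a, gamma (L a b)) \in triples L.
  rewrite -H; apply/imsetP; exists (a, b, L a b); first by rewrite inE /=.
  by rewrite /= perm1.
by rewrite inE /= => /eqP.
Qed.

Theorem theorem4p6 (n u v : nat) (beta gamma : {perm 'I_n}) :
  odd v -> n = 2 ^ u * v ->
  in_Par12 1 beta gamma ->
  (forall c, c \in porbits beta -> 2 ^ u %| #|c|) ->
  n_odd_cycles gamma <= n_odd_cycles beta /\
  (1 <= u -> forall c, c \in porbits gamma -> ~~ odd #|c|).
Proof.
move=> ov En [L [[Lrow _] Hap]] Hb.
have HL := HLfrom Hap.
have Hbeta : forall a, 2 ^ u %| #|porbit beta a|.
  by move=> a; apply: Hb; apply: imset_f.
have partii : 1 <= u -> forall c, c \in porbits gamma -> ~~ odd #|c|.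
  move=> u1 c /imsetP [z _ ->]; apply/negP => om.
  set m := #|porbit gamma z|.
  have Hz : iter m gamma z = z by exact: iter_porbit.
  have : 2 ^ u.+1 %| #|'I_n|.
    apply: (porbits_dvd (s := gp Lrow HL Hz)) => a.
    set r := #|porbit _ a|.
    have F := gfix Lrow HL Hz a; rewrite -/r in F.
    case oj: (odd (m * r)).
    - have /porbit_dvd D := K1 oj F.
      have := dvdn_trans (dvdn_trans (dvdn_exp2l 2 u1) (Hbeta a)) D.
      by rewrite dvdn2 oj.
    - have /porbit_dvd D := K2 (negbT oj) F.
      have H2 := dvdn_trans (Hbeta a) D.
      have H3 : 2 ^ u.+1 %| m * r.
        rewrite -[m * r](odd_double_half) oj add0n -muln2 expnSr.
        exact: dvdn_mul H2 (dvdnn 2).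
      by rewrite -(@Gauss_dvdr _ m) // coprimeXl // coprime2n.
  rewrite card_ord En expnS mulnC dvdn_pmul2l ?expn_gt0 // dvdn2 ov //.
split => //.
case: u En Hb Hbeta partii => [|u'] En Hb Hbeta partii; last first.
  rewrite /n_odd_cycles (_ : [set c in porbits gamma | odd #|c|] = set0) ?cards0 //.
  apply/setP => c; rewrite !inE; case: (boolP (c \in porbits gamma)) => //= cP.
  exact: negbTE (partii isT c cP).
rewrite expn0 mul1n in En.
have on : odd n by rewrite En.
pose F (D : {set 'I_n}) :=
  if [pick x in D] is Some a then porbit gamma (L a (iter (#|D|)./2 beta a)) else set0.
have sub : [set c in porbits gamma | odd #|c|] \subset F @: [set c in porbits beta | odd #|c|].
  apply/subsetP => C; rewrite inE => /andP [/imsetP [z _ ->] om].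
  set m := #|porbit gamma z| in om.
  have Hz : iter m gamma z = z by exact: iter_porbit.
  set g := gp Lrow HL Hz.
  have [a oa] : exists a, odd #|porbit g a|.
    case: (pickP (fun a => odd #|porbit g a|)) => [a oa | none]; first by exists a.
    have : 2 %| #|'I_n|.
      by apply: (porbits_dvd (s := g)) => a; rewrite dvdn2 none.
    by rewrite card_ord dvdn2 on.
  set r := #|porbit g a| in oa.
  have FF := gfix Lrow HL Hz a; rewrite -/r in FF.
  set s := sig Lrow z a in FF.
  have oj : odd (m * r) by rewrite oddM om oa.
  have Fb := K1 oj FF.
  set j := m * r in oj FF Fb.
  set hj := j./2.
  have Ej : j = hj.*2.+1 by rewrite -[LHS]odd_double_half oj add1n.
  have Es : s = iter hj beta a by move: FF; rewrite {1}Ej Todd => -[].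
  set D := porbit beta a.
  have cD : #|D| %| j by exact: porbit_dvd.
  have oc : odd #|D|.
    case/boolP: (odd #|D|) => // ev.
    have : 2 %| j by apply: dvdn_trans cD; rewrite dvdn2.
    by rewrite dvdn2 oj.
  apply/imsetP; exists D; first by rewrite inE imset_f.
  rewrite /F; case: pickP => [a' a'D | none]; last by have := none a; rewrite porbit_id.
  move/porbitP: a'D => [i ->]; rewrite permX.
  set c := #|D| in cD oc *.
  set h := c./2.
  have Ec : c = h.*2.+1 by rewrite -[LHS]odd_double_half oc add1n.
  have [q Eq] := dvdnP cD.
  have oq : odd q by move: oj; rewrite Eq oddM => /andP [].
  have Eq2 : q = (q./2).*2.+1 by rewrite -[LHS]odd_double_half oq add1n.
  have Ehj : hj = h + q./2 * c.
    move: Ej; rewrite Eq {1}Eq2 {1}Ec; lia.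
  have Es2 : s = iter h beta a by rewrite Es Ehj iterD /c /D iter_porbit_mul.
  have -> : iter h beta (iter i beta a) = iter i beta s.
    by rewrite Es2 -!iterD addnC.
  have := LT HL i.*2 (a, s); rewrite Teven /= Lsig => ->.
  by rewrite -permX porbit_perm.
rewrite /n_odd_cycles; exact: leq_trans (subset_leq_card sub) (leq_imset_card _ _).
Qed.
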